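(* For $n\geq 4$ and $m\in\{3,\dots,n-1\}$, the algebra $\mathtt{A}_n^{\{m\}}$ has infinite representation type.
   Context: $\Bbbk$ is an algebraically closed field; arrows compose right to left. $\mathtt{A}_n$ is the algebra of the quiver with vertices $1,\dots,n$, arrows $a_i:i\to i+1$, $b_i:i+1\to i$ ($1\le i\le n-1$), relations $a_ib_i=b_{i+1}a_{i+1}$ ($1\le i\le n-2$), $a_{n-1}b_{n-1}=0$. For $X\subset\{2,\dots,n\}$, $e_X$ is the sum of primitive idempotents for vertices in $\{1\}\cup X$ and $\mathtt{A}_n^X=e_X\mathtt{A}_ne_X$. *)

(* Defs.v *)
From HB Require Import structures.
From mathcomp Require Import all_boot all_order all_algebra.
Set Implicit Arguments. Unset Strict Implicit. Unset Printing Implicit Defensive.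
Import GRing.Theory.
Local Open Scope ring_scope.

(* Arrows of the quiver of A_n:  Aa i = a_i : i -> i+1,  Bb i = b_i : i+1 -> i. *)
Inductive arrow := Aa of nat | Bb of nat.

Definition step (n : nat) (v : nat) (x : arrow) : option nat :=
  match x with
  | Aa i => if (v == i) && (1 <= i <= n.-1)%N then Some i.+1 else None
  | Bb i => if (v == i.+1) && (1 <= i <= n.-1)%N then Some i else None
  end.

(* A path is (source vertex, list of arrows in the order they are traversed).
   With composition written right to left, the algebra element  p_k ... p_1
   is represented by (s, [:: p_1; ...; p_k]). *)
Definition path := (nat * seq arrow)%type.

Definition ptarget (n : nat) (p : path) : option nat :=
  foldl (fun o x => obind (fun v => step n v x) o) (Some p.1) p.2.

(* The vertex set {1} u X of the idempotent e_X. *)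
Definition inS (X : seq nat) (v : nat) : bool := (v == 1%N) || (v \in X).

(* Paths of the quiver whose source and target lie in {1} u X; these form a
   basis of e_X kQ e_X. *)
Definition Spath (n : nat) (X : seq nat) (p : path) : bool :=
  [&& inS X p.1, (1 <= p.1 <= n)%N &
      match ptarget n p with Some t => inS X t | None => false end].

(* A finite-dimensional representation: a space K^d (row vectors) and, for every
   path, a matrix (only values on Spaths matter).  The path algebra element p
   acts by v |-> v *m ract p. *)
Record rep (K : fieldType) := Rep { rdim : nat; ract : path -> 'M[K]_rdim }.

(* Being a unital (left) module over A_n^X = e_X (kQ/I) e_X
   = e_X kQ e_X / e_X I e_X:  multiplicative on the path basis of e_X kQ e_X,
   unital (1 = sum of e_v, v in {1} u X), and annihilating e_X I e_X, which is
   spanned by the elements  u r w  with u, w paths and r a defining relation. *)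
Definition is_module (K : fieldType) (n : nat) (X : seq nat) (M : rep K) : Prop :=
  [/\ \sum_(v <- iota 1 n | inS X v) ract M (v, [::]) = 1%:M,
      (forall p q : path, Spath n X p -> Spath n X q ->
         if ptarget n p == Some q.1
         then ract M (p.1, p.2 ++ q.2) = ract M p *m ract M q
         else ract M p *m ract M q = 0),
      (* a_i b_i = b_{i+1} a_{i+1}, 1 <= i <= n-2 *)
      (forall (i s : nat) (l1 l2 : seq arrow), (1 <= i <= n - 2)%N ->
         Spath n X (s, l1 ++ [:: Bb i; Aa i] ++ l2) ->
         ract M (s, l1 ++ [:: Bb i; Aa i] ++ l2)
         = ract M (s, l1 ++ [:: Aa i.+1; Bb i.+1] ++ l2)) &
      (* a_{n-1} b_{n-1} = 0 *)
      (forall (s : nat) (l1 l2 : seq arrow),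
         Spath n X (s, l1 ++ [:: Bb n.-1; Aa n.-1] ++ l2) ->
         ract M (s, l1 ++ [:: Bb n.-1; Aa n.-1] ++ l2) = 0)].

Definition is_hom (K : fieldType) (n : nat) (X : seq nat) (M N : rep K)
  (f : 'M[K]_(rdim M, rdim N)) : Prop :=
  forall p : path, Spath n X p -> ract M p *m f = f *m ract N p.

Arguments is_hom [K] n X M N f.

Definition iso_mod (K : fieldType) (n : nat) (X : seq nat) (M N : rep K) : Prop :=
  exists (f : 'M[K]_(rdim M, rdim N)) (g : 'M[K]_(rdim N, rdim M)),
    [/\ is_hom n X M N f, f *m g = 1%:M & g *m f = 1%:M].

Definition is_submod (K : fieldType) (n : nat) (X : seq nat) (M : rep K)
  (U : 'M[K]_(rdim M)) : Prop :=
  forall p : path, Spath n X p -> (U *m ract M p <= U)%MS.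

Arguments is_submod [K] n X M U.

Definition indecomposable (K : fieldType) (n : nat) (X : seq nat) (M : rep K) : Prop :=
  (0 < rdim M)%N /\
  forall U V : 'M[K]_(rdim M), is_submod n X M U -> is_submod n X M V ->
    \rank (U :&: V)%MS = 0%N -> (U + V == 1%:M)%MS ->
    (\rank U == 0%N) || (\rank V == 0%N).

Definition infinite_rep_type (K : fieldType) (n : nat) (X : seq nat) : Prop :=
  ~ exists (k : nat) (F : 'I_k -> rep K),
      (forall i, is_module n X (F i)) /\
      forall M : rep K, is_module n X M -> indecomposable n X M ->
        exists i, iso_mod n X M (F i).

(* Main.v *)
Require Import Defs.
From mathcomp Require Import all_boot all_order all_algebra zify.
Set Implicit Arguments. Unset Strict Implicit. Unset Printing Implicit Defensive.
Import GRing.Theory.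

Lemma foldl_None n l :
  foldl (fun o x => obind (fun v => step n v x) o) None l = None.
Proof. elim: l => [|x l IH] //=. Qed.

Lemma pt_cons n s x l :
  ptarget n (s, x :: l) = obind (fun v => ptarget n (v, l)) (step n s x).
Proof. rewrite /ptarget /=; case: (step n s x) => [w|] //=; exact: foldl_None. Qed.

Lemma pt_cat n s l1 l2 :
  ptarget n (s, l1 ++ l2) = obind (fun v => ptarget n (v, l2)) (ptarget n (s, l1)).
Proof.
rewrite /ptarget /= foldl_cat; case: (foldl _ _ l1) => //=; exact: foldl_None.
Qed.

Lemma pt_nil n s : ptarget n (s, [::]) = Some s. Proof. by []. Qed.

Lemma step_adj n v x w : step n v x = Some w -> (w = v.+1 \/ v = w.+1).
Proof.
case: x => i /=; case: ifP => // /andP[/eqP -> _] [<-]; by [left | right].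
Qed.

Lemma pt_dist n s l t : ptarget n (s, l) = Some t ->
  (t <= s + size l)%N /\ (s <= t + size l)%N.
Proof.
elim: l s => [|x l IH] s; first by rewrite pt_nil => -[->]; lia.
rewrite pt_cons; case E: (step n s x) => [w|] //= /IH [h1 h2].
have := step_adj E; lia.
Qed.

Lemma pt_one n s x t : ptarget n (s, [:: x]) = Some t -> t <> s.
Proof.
rewrite pt_cons; case E: (step n s x) => [w|] //= [<-].
have := step_adj E; lia.
Qed.

Fixpoint up (v k : nat) : seq arrow :=
  if k is k'.+1 then Aa v :: up v.+1 k' else [::].
Fixpoint down (v k : nat) : seq arrow :=
  if k is k'.+1 then Bb v.-1 :: down v.-1 k' else [::].

Lemma size_up v k : size (up v k) = k.
Proof. by elim: k v => //= k IH v; rewrite IH. Qed.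
Lemma size_down v k : size (down v k) = k.
Proof. by elim: k v => //= k IH v; rewrite IH. Qed.

Lemma pt_up n v k : (1 <= v)%N -> (v + k <= n)%N ->
  ptarget n (v, up v k) = Some (v + k).
Proof.
elim: k v => [|k IH] v h1 h2 /=; first by rewrite addn0.
rewrite pt_cons /= eqxx.
have -> : (1 <= v <= n.-1)%N by lia.
rewrite /= IH; [congr Some; lia | lia | lia].
Qed.

Lemma pt_down n v k : (k < v)%N -> (v <= n)%N ->
  ptarget n (v, down v k) = Some (v - k).
Proof.
elim: k v => [|k IH] v h1 h2 /=; first by rewrite subn0.
rewrite pt_cons /=.
have -> : (v == v.-1.+1) by apply/eqP; lia.
have -> : (1 <= v.-1 <= n.-1)%N by lia.
rewrite /= IH; [congr Some; lia | lia | lia].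
Qed.

Lemma pt_rel1 n s l1 l2 i : (1 <= i <= n - 2)%N ->
  ptarget n (s, l1 ++ [:: Bb i; Aa i] ++ l2) =
  ptarget n (s, l1 ++ [:: Aa i.+1; Bb i.+1] ++ l2).
Proof.
move=> hi; rewrite !pt_cat; case: (ptarget n (s, l1)) => [v|] //=.
rewrite !pt_cons /=.
have h1 : (1 <= i <= n.-1)%N by lia.
have h2 : (1 <= i.+1 <= n.-1)%N by lia.
case E: (v == i.+1) => //=.
move/eqP: E => E; subst v.
have e1 : (0 < i) = true by lia.
have e2 : (i <= n.-1) = true by lia.
have e3 : (i < n.-1) = true by lia.
rewrite e1 e2 e3 /= !pt_cons /= !eqxx e1 e2 e3 /=.
have e4 : (i.+1 <= n.-1) = true by lia.
by [].

Qed.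
Local Open Scope ring_scope.

Definition o0 : 'I_4 := @Ordinal 4 0 isT.
Definition o1 : 'I_4 := @Ordinal 4 1 isT.
Definition o2 : 'I_4 := @Ordinal 4 2 isT.
Definition o3 : 'I_4 := @Ordinal 4 3 isT.

Definition dd (K : fieldType) (i j : 'I_4) : 'M[K]_4 := delta_mx i j.
Definition E1m (K : fieldType) := dd K o0 o0 + dd K o1 o1.
Definition Emm (K : fieldType) := dd K o2 o2 + dd K o3 o3.
Definition Xm (K : fieldType) := dd K o0 o1.
Definition Ym (K : fieldType) := dd K o2 o3.
Definition Am (K : fieldType) (l : K) := l *: dd K o0 o3.
Definition Gm (K : fieldType) := dd K o2 o1.
Definition Prm (K : fieldType) := dd K o0 o0 + dd K o2 o2.
Definition Qcm (K : fieldType) := dd K o1 o1 + dd K o3 o3.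

Lemma dd_mul (K : fieldType) i j k l : dd K i j *m dd K k l = dd K i l *+ (j == k).
Proof. exact: mul_delta_mx_cond. Qed.

Ltac mxsimp := rewrite /E1m /Emm /Xm /Ym /Am /Gm /Prm /Qcm;
  repeat (rewrite ?mulmxDl ?mulmxDr -?scalemxAl -?scalemxAr ?mul0mx ?mulmx0 ?dd_mul /=
     ?mulr0n ?mulr1n ?add0r ?addr0 ?scaler0 ?scalerDr).

Lemma t1 (K : fieldType) : E1m K *m E1m K = E1m K. Proof. mxsimp. done. Qed.
Lemma t2 (K : fieldType) l : E1m K *m Am l *m Emm K = Am l. Proof. mxsimp. done. Qed.
Lemma t3 (K : fieldType) : Qcm K *m Prm K = 0. Proof. mxsimp. done. Qed.

Definition mval (K : fieldType) (m : nat) (l : K) (s t L : nat) : 'M[K]_4 :=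
  if (s == 1%N) && (t == 1%N) then (if L == 0%N then E1m K else if L == 2%N then Xm K else 0)
  else if (s == m) && (t == m) then (if L == 0%N then Emm K else if L == 2%N then Ym K else 0)
  else if (s == 1%N) && (t == m) then (if L == m.-1 then Am l else 0)
  else if (s == m) && (t == 1%N) then (if L == m.-1 then Gm K else 0)
  else 0.

Definition Ev (K : fieldType) (m v : nat) : 'M[K]_4 := if v == 1%N then E1m K else Emm K.

Lemma vert m v : (v == 1%N) || (v \in [:: m]) -> v = 1%N \/ v = m.
Proof. by rewrite mem_seq1 => /orP[/eqP|/eqP]; [left|right]. Qed.

Lemma mval_supp (K : fieldType) m (l : K) s t L : m != 1%N ->
  (s = 1%N \/ s = m) -> (t = 1%N \/ t = m) ->
  mval m l s t L = Ev K m s *m mval m l s t L *m Ev K m t.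
Proof.
move=> m1 hs ht; have m1' : (m == 1%N) = false by apply/negbTE.
have m1'' : (1%N == m) = false by rewrite eq_sym.
rewrite /mval /Ev.
case: hs => ->; case: ht => ->; rewrite ?eqxx ?m1' ?m1'' ?m1' ?m1''' /=;
  repeat case: ifP => _; mxsimp; done.
Qed.

Lemma mval_rad (K : fieldType) m (l : K) s t L : L != 0%N ->
  mval m l s t L = Prm K *m mval m l s t L *m Qcm K.
Proof.
move=> L0; rewrite /mval (negbTE L0).
repeat case: ifP => _; mxsimp; done.
Qed.

Lemma mval00 (K : fieldType) m (l : K) s : m != 1%N -> (s = 1%N \/ s = m) ->
  mval m l s s 0 = Ev K m s.
Proof.
move=> m1 hs; have m1' : (m == 1%N) = false by apply/negbTE.
have m1'' : (1%N == m) = false by rewrite eq_sym.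
by rewrite /mval /Ev; case: hs => ->; rewrite ?eqxx ?m1' ?m1''.
Qed.

Lemma Ev_idem (K : fieldType) m s : Ev K m s *m Ev K m s = Ev K m s.
Proof. rewrite /Ev; case: ifP => _; mxsimp; done. Qed.

Lemma Ev_orth (K : fieldType) m s t : m != 1%N -> (s = 1%N \/ s = m) -> (t = 1%N \/ t = m) ->
  s <> t -> Ev K m s *m Ev K m t = 0.
Proof.
move=> m1 hs ht st; have m1' : (m == 1%N) = false by apply/negbTE.
have m1'' : (1%N == m) = false by rewrite eq_sym.
rewrite /Ev; case: hs st => ->; case: ht => -> // _; rewrite ?eqxx ?m1' ?m1''; mxsimp; done.
Qed.

Lemma QP0 (K : fieldType) : Qcm K *m Prm K = 0. Proof. mxsimp; done. Qed.

Lemma rad_mul (K : fieldType) (A B : 'M[K]_4) :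
  A = Prm K *m A *m Qcm K -> B = Prm K *m B *m Qcm K -> A *m B = 0.
Proof.
move=> -> ->; by rewrite -!mulmxA (mulmxA (Qcm K)) QP0 mul0mx !mulmx0.
Qed.

Lemma mval_zero (K : fieldType) m (l : K) s t L :
  (2 < m)%N -> (s = 1%N \/ s = m) -> (t = 1%N \/ t = m) ->
  L <> 0%N -> L <> 2%N -> (s <> t -> L <> m.-1) -> mval m l s t L = 0.
Proof.
move=> m2 hs ht L0 L2 Lm; have m1' : (m == 1%N) = false by apply/negP; lia.
have m1'' : (1%N == m) = false by rewrite eq_sym.
have L0' : (L == 0%N) = false by apply/eqP.
have L2' : (L == 2%N) = false by apply/eqP.
rewrite /mval L0' L2'.
case: hs Lm => ->; case: ht => -> Lm; rewrite ?eqxx ?m1' ?m1'' //=.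
  by have -> : (L == m.-1) = false by apply/eqP; apply: Lm; lia.
by have -> : (L == m.-1) = false by apply/eqP; apply: Lm; lia.
Qed.
Lemma E1Em1 (K : fieldType) : E1m K + Emm K = 1%:M.
Proof.
apply/matrixP => i j; rewrite /E1m /Emm /dd !mxE.
case: i => [[|[|[|[|i]]]] Hi] //; case: j => [[|[|[|[|j]]]] Hj] //; rewrite /= ?(add0r, addr0) //.
Qed.

Definition ractM (K : fieldType) n m (l : K) (p : nat * seq arrow) : 'M[K]_4 :=
  match ptarget n p with Some t => mval m l p.1 t (size p.2) | None => 0 end.

Definition Modl (K : fieldType) n m (l : K) : rep K := @Rep K 4 (ractM n m l).

Lemma SpathP n m p : Spath n [:: m] p ->
  exists t, [/\ ptarget n p = Some t, p.1 = 1%N \/ p.1 = m & t = 1%N \/ t = m].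
Proof.
case/and3P => h1 _; case E: (ptarget n p) => [t|] // h3.
by exists t; split => //; apply: vert.
Qed.

Lemma unit_cond (K : fieldType) n m (l : K) : (1 < m <= n)%N ->
  \sum_(v <- iota 1 n | inS [:: m] v) ract (Modl n m l) (v, [::]) = 1%:M.
Proof.
move=> hm.
rewrite big_mkcond /=.
rewrite /ractM /=.
have m1 : (m == 1%N) = false by apply/negP; lia.
have m1' : (1%N == m) = false by rewrite eq_sym.
have H : forall i, (if inS [:: m] i then mval m l i i 0 else 0) =
  (if i == 1%N then E1m K else 0) + (if i == m then Emm K else 0).
  move=> i; rewrite /inS mem_seq1.
  case: (i =P 1%N) => [->|ne] /=; first by rewrite /mval eqxx m1' addr0.
  case: (i =P m) => [->|ne2] /=; last by rewrite addr0.
  by rewrite add0r /mval m1 /= eqxx.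
under eq_bigr => i _ do rewrite H.
rewrite big_split /= -E1Em1.
have U : uniq (iota 1 n) by apply: iota_uniq.
rewrite (bigD1_seq 1%N) //=; last by rewrite mem_iota; lia.
rewrite (bigD1_seq m) //=; last by rewrite mem_iota; lia.
rewrite eqxx !big1 ?addr0 //.
  by move=> i /negbTE ->.
by move=> i /negbTE ->.
Qed.


Lemma pt_two n m s l t : (2 < m)%N -> (s = 1%N \/ s = m) -> (t = 1%N \/ t = m) ->
  ptarget n (s, l) = Some t -> l <> [::] -> (2 <= size l)%N.
Proof.
move=> m2 hs ht; case: l => [|x [|y l]] //= H _.
have := pt_one H; have := pt_dist H => /= -[h1 h2] ne.
case: hs h1 h2 ne => ->; case: ht => -> //; lia.
Qed.

Lemma pt_far n m s l t : (s = 1%N \/ s = m) -> (t = 1%N \/ t = m) -> s <> t ->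
  ptarget n (s, l) = Some t -> (m.-1 <= size l)%N.
Proof.
move=> hs ht ne /pt_dist [h1 h2].
case: hs h1 h2 ne => ->; case: ht => -> //; lia.
Qed.

Lemma mult_cond (K : fieldType) n m (l : K) (p q : nat * seq arrow) : (2 < m)%N ->
  Spath n [:: m] p -> Spath n [:: m] q ->
  if ptarget n p == Some q.1
  then ractM n m l (p.1, p.2 ++ q.2) = ractM n m l p *m ractM n m l q
  else ractM n m l p *m ractM n m l q = 0.
Proof.
move=> m2; have m1 : m != 1%N by apply/negP; lia.
case: p q => s l1 [s' l2] /SpathP [t [Ht hs ht]] /SpathP [u [Hu hs' hu]] /=.
simpl in *.
rewrite /ractM /= pt_cat Ht Hu /=.
case: eqP => [[e]|ne]; last first.
  rewrite (mval_supp l _ m1 hs ht) (mval_supp l _ m1 hs' hu).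
  have ne' : t <> s' by move=> e; apply: ne; rewrite e.
  by rewrite -!mulmxA (mulmxA (Ev K m t)) (Ev_orth _ m1 ht hs' ne') mul0mx !mulmx0.
subst s'; rewrite Hu /= size_cat.
case: l1 Ht => [|x1 l1] Ht.
  move: Ht; rewrite pt_nil => -[e]; subst t.
  rewrite (mval00 l m1 hs) /= add0n [mval _ _ s u _](mval_supp l _ m1 hs hu).
  by rewrite !mulmxA Ev_idem.
case: l2 Hu => [|x2 l2] Hu.
  move: Hu; rewrite pt_nil => -[e]; subst u.
  rewrite (mval00 l m1 ht) /= addn0 [mval _ _ s t _](mval_supp l _ m1 hs ht).
  by rewrite -!mulmxA Ev_idem.
have a2 := pt_two m2 hs ht Ht (fun e : x1 :: l1 = [::] => ltac:(discriminate)).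
have b2 := pt_two m2 ht hu Hu (fun e : x2 :: l2 = [::] => ltac:(discriminate)).
rewrite (rad_mul (mval_rad m l s t (L := size (x1 :: l1)) _) (mval_rad m l t u (L := size (x2 :: l2)) _)) //.
apply: (mval_zero _ m2 hs hu); try lia.
move=> su.
have [st|tu] : s <> t \/ t <> u by case: (t =P s) => [e|]; [right; rewrite e | left; apply: nesym].
  have := pt_far hs ht st Ht; lia.
have := pt_far ht hu tu Hu; lia.
Qed.


Lemma rel1_cond (K : fieldType) n m (l : K) i s l1 l2 : (1 <= i <= n - 2)%N ->
  ractM n m l (s, l1 ++ [:: Bb i; Aa i] ++ l2)
  = ractM n m l (s, l1 ++ [:: Aa i.+1; Bb i.+1] ++ l2).
Proof. by move=> hi; rewrite /ractM pt_rel1 //= !size_cat. Qed.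

Lemma rel2_cond (K : fieldType) n m (l : K) s l1 l2 : (4 <= n)%N -> (3 <= m <= n - 1)%N ->
  Spath n [:: m] (s, l1 ++ [:: Bb n.-1; Aa n.-1] ++ l2) ->
  ractM n m l (s, l1 ++ [:: Bb n.-1; Aa n.-1] ++ l2) = 0.
Proof.
move=> hn hm /SpathP [t [Ht hs ht]] /=; simpl in hs.
rewrite /ractM Ht /=.
move: Ht; rewrite pt_cat; case E1: (ptarget n (s, l1)) => [v|] //=.
rewrite !pt_cons /=.
case Ev1: (v == n.-1.+1) => //=; move/eqP: Ev1 => ev.
have -> : (1 <= n.-1 <= n.-1)%N by lia.
rewrite /= pt_cons /= eqxx.
have -> : (1 <= n.-1 <= n.-1)%N by lia.
move=> /= H2.
have := pt_dist E1; have := pt_dist H2; rewrite ev => /= -[a1 a2] [b1 b2].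
rewrite !size_cat /=.
apply: (mval_zero _ _ hs ht); try lia.
Qed.

Lemma Modl_module (K : fieldType) n m (l : K) : (4 <= n)%N -> (3 <= m <= n - 1)%N ->
  is_module n [:: m] (Modl n m l).
Proof.
move=> hn hm; split.
- by apply: unit_cond; lia.
- by move=> p q hp hq; apply: mult_cond => //; lia.
- by move=> i s l1 l2 hi _; apply: rel1_cond.
- by move=> s l1 l2 hp; apply: rel2_cond.
Qed.


Lemma rX n m : (4 <= n)%N -> (3 <= m <= n - 1)%N ->
  ptarget n (1%N, [:: Aa 1; Bb 1]) = Some 1%N.
Proof.
move=> hn hm; rewrite !pt_cons /= ?eqxx /=.
have h1 : (0 < n.-1)%N by lia.
rewrite h1 /= pt_cons /= ?h1 //.
Qed.

Lemma rY n m : (4 <= n)%N -> (3 <= m <= n - 1)%N ->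
  ptarget n (m, [:: Aa m; Bb m]) = Some m.
Proof.
move=> hn hm; rewrite !pt_cons /= ?eqxx /=.
have h1 : (0 < m <= n.-1)%N by lia.
by rewrite h1 /= pt_cons /= eqxx h1.
Qed.

Lemma rA n m : (4 <= n)%N -> (3 <= m <= n - 1)%N ->
  ptarget n (1%N, up 1 m.-1) = Some m.
Proof. move=> hn hm; rewrite pt_up; [congr Some; lia | lia | lia]. Qed.

Lemma rG n m : (4 <= n)%N -> (3 <= m <= n - 1)%N ->
  ptarget n (m, down m m.-1) = Some 1%N.
Proof. move=> hn hm; rewrite pt_down; [congr Some; lia | lia | lia]. Qed.

Lemma Sp n m p t : (4 <= n)%N -> (3 <= m <= n - 1)%N ->
  (p.1 = 1%N \/ p.1 = m) -> (t = 1%N \/ t = m) -> ptarget n p = Some t ->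
  Spath n [:: m] p.
Proof.
move=> hn hm hs ht H; rewrite /Spath H /inS !mem_seq1.
by case: hs => ->; case: ht => ->; rewrite ?eqxx ?orbT /=; apply/andP; split; lia.
Qed.

Lemma vX (K : fieldType) n m (l : K) : (4 <= n)%N -> (3 <= m <= n - 1)%N ->
  ractM n m l (1%N, [:: Aa 1; Bb 1]) = Xm K.
Proof. by move=> hn hm; rewrite /ractM (rX hn hm). Qed.

Lemma vY (K : fieldType) n m (l : K) : (4 <= n)%N -> (3 <= m <= n - 1)%N ->
  ractM n m l (m, [:: Aa m; Bb m]) = Ym K.
Proof.
move=> hn hm; rewrite /ractM rY //= /mval.
have h : (m == 1%N) = false by apply/negP; lia.
by rewrite h !eqxx.
Qed.

Lemma vA (K : fieldType) n m (l : K) : (4 <= n)%N -> (3 <= m <= n - 1)%N ->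
  ractM n m l (1%N, up 1 m.-1) = Am l.
Proof.
move=> hn hm; rewrite /ractM rA //= /mval size_up !eqxx.
have -> : (m == 1%N) = false by apply/negP; lia.
by have -> : (1%N == m) = false by apply/negP; lia.
Qed.

Lemma vG (K : fieldType) n m (l : K) : (4 <= n)%N -> (3 <= m <= n - 1)%N ->
  ractM n m l (m, down m m.-1) = Gm K.
Proof.
move=> hn hm; rewrite /ractM rG //= /mval size_down !eqxx.
have h : (m == 1%N) = false by apply/negP; lia.
by rewrite (eq_sym 1%N m) h.
Qed.

Lemma vE1 (K : fieldType) n m (l : K) : ractM n m l (1%N, [::]) = E1m K.
Proof. by []. Qed.

Lemma vEm (K : fieldType) n m (l : K) : (3 <= m)%N -> ractM n m l (m, [::]) = Emm K.
Proof.
move=> hm; rewrite /ractM /= /mval.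
have h : (m == 1%N) = false by apply/negP; lia.
by rewrite h !eqxx.
Qed.

Lemma rowdd (K : fieldType) (w : 'rV[K]_4) i j :
  w *m dd K i j = w 0 i *: delta_mx 0 j.
Proof.
apply/rowP => k; rewrite !mxE (bigD1 i) //= big1 => [|x /negbTE xi].
  by rewrite /dd !mxE eqxx /= addr0 mulr_natr.
by rewrite /dd !mxE xi mulr0.
Qed.

Lemma subm_mul (K : fieldType) n m (l : K) (W : 'M[K]_4) p (w : 'rV[K]_4) :
  is_submod n [:: m] (Modl n m l) W -> Spath n [:: m] p -> (w <= W)%MS ->
  (w *m ractM n m l p <= W)%MS.
Proof. move=> sW hp hw; exact: submx_trans (submxMr _ hw) (sW p hp). Qed.

Lemma no_common (K : fieldType) (U V : 'M[K]_4) (x y : K) j :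
  (x *: (delta_mx 0 j : 'rV[K]_4) <= U)%MS -> (y *: (delta_mx 0 j : 'rV[K]_4) <= V)%MS ->
  x != 0 -> y != 0 -> \rank (U :&: V)%MS = 0%N -> False.
Proof.
move=> hx hy x0 y0 r0.
have hU : ((delta_mx 0 j : 'rV[K]_4) <= U)%MS.
  by rewrite -(scale1r (delta_mx 0 j)) -(mulVf x0) -scalerA scalemx_sub.
have hV : ((delta_mx 0 j : 'rV[K]_4) <= V)%MS.
  by rewrite -(scale1r (delta_mx 0 j)) -(mulVf y0) -scalerA scalemx_sub.
have : ((delta_mx 0 j : 'rV[K]_4) <= U :&: V)%MS by rewrite sub_capmx hU hV.
by move/mxrankS; rewrite r0 mxrank_delta.
Qed.

Lemma full_lem (K : fieldType) n m (l : K) (W : 'M[K]_4) (w w2 : 'rV[K]_4) :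
  (4 <= n)%N -> (3 <= m <= n - 1)%N ->
  is_submod n [:: m] (Modl n m l) W -> (w <= W)%MS -> (w2 <= W)%MS ->
  w 0 o0 = 1 -> w2 0 o2 = 1 -> (1%:M <= W)%MS.
Proof.
move=> hn hm sW hw hw2 w1 w21.
have S1 : Spath n [:: m] (1%N, [::]) by apply: (Sp hn hm (t := 1%N)) => //; left.
have Sm : Spath n [:: m] (m, [::]) by apply: (Sp hn hm (t := m)) => //; right.
have SX : Spath n [:: m] (1%N, [:: Aa 1; Bb 1]) by apply: (Sp hn hm _ _ (rX hn hm)); left.
have SY : Spath n [:: m] (m, [:: Aa m; Bb m]) by apply: (Sp hn hm _ _ (rY hn hm)); right.
have e1 : ((delta_mx 0 o1 : 'rV[K]_4) <= W)%MS.
  have := subm_mul sW SX hw; rewrite vX // /Xm rowdd w1 scale1r //.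
have e3 : ((delta_mx 0 o3 : 'rV[K]_4) <= W)%MS.
  have := subm_mul sW SY hw2; rewrite vY // /Ym rowdd w21 scale1r //.
have e0 : ((delta_mx 0 o0 : 'rV[K]_4) <= W)%MS.
  have := subm_mul sW S1 hw; rewrite vE1 /E1m mulmxDr !rowdd w1 scale1r => h.
  have -> : (delta_mx 0 o0 : 'rV[K]_4) =
     (delta_mx 0 o0 + w 0 o1 *: delta_mx 0 o1) + (-1) *: (w 0 o1 *: delta_mx 0 o1).
    by rewrite scaleN1r addrK.
  by apply: addmx_sub => //; apply: scalemx_sub; apply: scalemx_sub.
have e2 : ((delta_mx 0 o2 : 'rV[K]_4) <= W)%MS.
  have := subm_mul sW Sm hw2; rewrite vEm; last by lia.
  rewrite /Emm mulmxDr !rowdd w21 scale1r => h.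
  have -> : (delta_mx 0 o2 : 'rV[K]_4) =
     (delta_mx 0 o2 + w2 0 o3 *: delta_mx 0 o3) + (-1) *: (w2 0 o3 *: delta_mx 0 o3).
    by rewrite scaleN1r addrK.
  by apply: addmx_sub => //; apply: scalemx_sub; apply: scalemx_sub.
apply/row_subP => i; rewrite row1.
by case: i => [[|[|[|[|i]]]] Hi].
Qed.

Lemma decomp (K : fieldType) (U V : 'M[K]_4) j : (1%:M <= U + V)%MS ->
  exists a b : 'rV[K]_4, [/\ (a <= U)%MS, (b <= V)%MS & delta_mx 0 j = a + b].
Proof.
move=> full.
have : ((delta_mx 0 j : 'rV[K]_4) <= U + V)%MS.
  by rewrite -row1; apply: submx_trans full; apply: row_sub.
case/sub_addsmxP => [[x y]] /= e.
by exists (x *m U), (y *m V); split => //; apply: submxMl.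
Qed.

Lemma indec (K : fieldType) n m (l : K) : (4 <= n)%N -> (3 <= m <= n - 1)%N ->
  indecomposable n [:: m] (Modl n m l).
Proof.
move=> hn hm; split => //=.
move=> U V sU sV r0 /andP[_ full].
have SX : Spath n [:: m] (1%N, [:: Aa 1; Bb 1]) by apply: (Sp hn hm _ _ (rX hn hm)); left.
have SG : Spath n [:: m] (m, down m m.-1) by apply: (Sp hn hm _ _ (rG hn hm)); [right|left].
have [a [b [ha hb eab]]] := decomp o0 full.
have [c [d [hc hd ecd]]] := decomp o2 full.
have eab0 : a 0 o0 + b 0 o0 = 1.
  by have := congr1 (fun M : 'rV[K]_4 => M 0 o0) eab; rewrite !mxE /= => <-.
have ecd0 : c 0 o2 + d 0 o2 = 1.
  by have := congr1 (fun M : 'rV[K]_4 => M 0 o2) ecd; rewrite !mxE /= => <-.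
have hA : (a 0 o0 *: (delta_mx 0 o1 : 'rV[K]_4) <= U)%MS.
  by have := subm_mul sU SX ha; rewrite vX // /Xm rowdd.
have hB : (b 0 o0 *: (delta_mx 0 o1 : 'rV[K]_4) <= V)%MS.
  by have := subm_mul sV SX hb; rewrite vX // /Xm rowdd.
have hC : (c 0 o2 *: (delta_mx 0 o1 : 'rV[K]_4) <= U)%MS.
  by have := subm_mul sU SG hc; rewrite vG // /Gm rowdd.
have hD : (d 0 o2 *: (delta_mx 0 o1 : 'rV[K]_4) <= V)%MS.
  by have := subm_mul sV SG hd; rewrite vG // /Gm rowdd.
have [a0|a0] := eqVneq (a 0 o0) 0.
- have b1 : b 0 o0 = 1 by rewrite -eab0 a0 add0r.
  have c0 : c 0 o2 = 0.
    apply/eqP; apply/negP => /negP c0.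
    by apply: (no_common hC hB c0 _ r0); rewrite b1 oner_neq0.
  have d1 : d 0 o2 = 1 by rewrite -ecd0 c0 add0r.
  have fV := full_lem hn hm sV hb hd b1 d1.
  apply/orP; left; apply/eqP.
  have : (U <= U :&: V)%MS by rewrite sub_capmx submx_refl (submx_trans (submx1 U) fV).
  by move/mxrankS; rewrite r0 leqn0 => /eqP.
- have b0 : b 0 o0 = 0.
    apply/eqP; apply/negP => /negP b0.
    exact: (no_common hA hB a0 b0 r0).
  have a1 : a 0 o0 = 1 by rewrite -eab0 b0 addr0.
  have d0 : d 0 o2 = 0.
    apply/eqP; apply/negP => /negP d0.
    exact: (no_common hA hD a0 d0 r0).
  have c1 : c 0 o2 = 1 by rewrite -ecd0 d0 addr0.
  have fU := full_lem hn hm sU ha hc a1 c1.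
  apply/orP; right; apply/eqP.
  have : (V <= U :&: V)%MS by rewrite sub_capmx submx_refl (submx_trans (submx1 V) fU).
  by move/mxrankS; rewrite r0 leqn0 => /eqP.
Qed.

Lemma ddL (K : fieldType) (f : 'M[K]_4) i j k r :
  (dd K i j *m f) k r = (k == i)%:R * f j r.
Proof.
rewrite !mxE (bigD1 j) //= big1 => [|x /negbTE xj].
  by rewrite /dd !mxE eqxx andbT addr0.
by rewrite /dd !mxE xj andbF mul0r.
Qed.

Lemma ddR (K : fieldType) (f : 'M[K]_4) i j k r :
  (f *m dd K i j) k r = f k i * (r == j)%:R.
Proof.
rewrite !mxE (bigD1 i) //= big1 => [|x /negbTE xi].
  by rewrite /dd !mxE eqxx addr0.
by rewrite /dd !mxE xi mulr0.
Qed.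

Lemma noniso (K : fieldType) n m (l l' : K) : (4 <= n)%N -> (3 <= m <= n - 1)%N ->
  iso_mod n [:: m] (Modl n m l) (Modl n m l') -> l = l'.
Proof.
move=> hn hm [f [g [hf fg gf]]]; simpl in f, g.
have SX : Spath n [:: m] (1%N, [:: Aa 1; Bb 1]) by apply: (Sp hn hm _ _ (rX hn hm)); left.
have SY : Spath n [:: m] (m, [:: Aa m; Bb m]) by apply: (Sp hn hm _ _ (rY hn hm)); right.
have SG : Spath n [:: m] (m, down m m.-1) by apply: (Sp hn hm _ _ (rG hn hm)); [right|left].
have SA : Spath n [:: m] (1%N, up 1 m.-1) by apply: (Sp hn hm _ _ (rA hn hm)); [left|right].
have hX := hf _ SX; have hY := hf _ SY; have hG := hf _ SG; have hA := hf _ SA.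
rewrite /= !vX // in hX; rewrite /= !vY // in hY; rewrite /= !vG // in hG.
rewrite /= !vA // in hA.
have f1 : forall r, f o1 r = f o0 o0 * (r == o1)%:R.
  move=> r; have := congr1 (fun M : 'M[K]_4 => M o0 r) hX.
  by rewrite /= /Xm ddL ddR /= mul1r.
have f11 : f o1 o1 = f o0 o0 by rewrite f1 eqxx mulr1.
have f00 : f o0 o0 != 0.
  apply/negP => /eqP z.
  have := congr1 (fun M : 'M[K]_4 => M o1 o1) fg.
  rewrite /= mxE big1 => [|r _]; last by rewrite f1 z mul0r mul0r.
  by rewrite mxE eqxx /= => /eqP; rewrite eq_sym oner_eq0.
have f22 : f o1 o1 = f o2 o2.
  have := congr1 (fun M : 'M[K]_4 => M o2 o1) hG.
  by rewrite /= /Gm ddL ddR /= mul1r mulr1.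
have f33 : f o3 o3 = f o2 o2.
  have := congr1 (fun M : 'M[K]_4 => M o2 o3) hY.
  by rewrite /= /Ym ddL ddR /= mul1r mulr1.
have e : (l *: (dd K o0 o3 *m f)) o0 o3 = (l' *: (f *m dd K o0 o3)) o0 o3.
  by rewrite scalemxAl scalemxAr hA.
rewrite mxE [in RHS]mxE ddL ddR /= mul1r mulr1 f33 -f22 f11 in e.
by apply: (mulIf f00); rewrite e mulrC.
Qed.


Lemma iso_trans (K : fieldType) n X (M M' N : rep K) :
  iso_mod n X M N -> iso_mod n X M' N -> iso_mod n X M M'.
Proof.
move=> [f1 [g1 [h1 fg1 gf1]]] [f2 [g2 [h2 fg2 gf2]]].
exists (f1 *m g2), (f2 *m g1); split.
- move=> p hp.
  have e : ract N p *m g2 = g2 *m ract M' p.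
    by rewrite -[RHS]mulmx1 -fg2 (mulmxA (g2 *m ract M' p) f2 g2) -(mulmxA g2 (ract M' p) f2) (h2 p hp) mulmxA gf2 mul1mx.
  by rewrite mulmxA (h1 p hp) -mulmxA e mulmxA.
- by rewrite -mulmxA (mulmxA g2) gf2 mul1mx fg1.
- by rewrite -mulmxA (mulmxA g1) gf1 mul1mx fg2.
Qed.

Lemma fresh (K : closedFieldType) (s : seq K) : exists x, x \notin s.
Proof.
pose P := \prod_(a <- s) ('X - a%:P).
have P0 : P != 0 by rewrite -size_poly_eq0 size_prod_XsubC.
have sz : size (P * 'X + 1) = (size s).+2.
  rewrite size_addl size_mulX // size_prod_XsubC //.
  by rewrite size_poly1.
have : size (P * 'X + 1) != 1%N by rewrite sz.
case/closed_rootP => x rx; exists x; apply/negP => xs.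
move: rx; rewrite /root hornerD hornerM hornerX hornerC.
have : root P x by rewrite root_prod_XsubC.
by rewrite /root => /eqP ->; rewrite mul0r add0r oner_eq0.
Qed.

Lemma distinct (K : closedFieldType) k : exists s : seq K, uniq s /\ size s = k.
Proof.
elim: k => [|k [s [us ss]]]; first by exists [::].
have [x xs] := fresh s; exists (x :: s); by rewrite /= xs us ss.
Qed.

From Stdlib Require Import ClassicalEpsilon.

Theorem lemma1 (K : closedFieldType) (n m : nat) :
  (4 <= n)%N -> (3 <= m <= n - 1)%N -> infinite_rep_type K n [:: m].
Proof.
move=> hn hm [k [F [HF Hcov]]].
have [s [us ss]] := distinct K k.+1.
pose lam (j : 'I_k.+1) := nth 0 s j.
have H : forall j : 'I_k.+1, exists i, iso_mod n [:: m] (Modl n m (lam j)) (F i).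
  by move=> j; apply: Hcov; [apply: Modl_module | apply: indec].
pose h j := proj1_sig (constructive_indefinite_description _ (H j)).
have hh : forall j, iso_mod n [:: m] (Modl n m (lam j)) (F (h j)).
  by move=> j; rewrite /h; case: constructive_indefinite_description.
have inj : injective h.
  move=> j1 j2 e.
  have i12 : iso_mod n [:: m] (Modl n m (lam j1)) (Modl n m (lam j2)).
    by apply: (iso_trans (hh j1)); rewrite e; exact: hh j2.
  have el := noniso hn hm i12; rewrite /lam in el.
  apply/val_inj/eqP; rewrite -(nth_uniq 0 _ _ us) ?ss ?ltn_ord //; exact/eqP.
have := leq_card h inj; rewrite !card_ord; lia.
Qed.
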